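(* Consider the nonlinear program and the objects $\mathcal{G}_\alpha$, $K_\alpha(x)$, $\Lambda_\alpha(x)$ described in the context, with $\alpha>0$ and $x\in\mathbb{R}^n$. If $\Lambda_\alpha(x)\ne\emptyset$, then: (i) every $(u,v)\in\Lambda_\alpha(x)$ is a minimizer of $\left\|\frac{\partial g}{\partial x}(x)^\top u+\frac{\partial h}{\partial x}(x)^\top v\right\|^2$ over $(u,v)\in K_\alpha(x)$; (ii) for every minimizer $(u,v)$ of that problem, $\mathcal{G}_\alpha(x)=-\nabla f(x)-\frac{\partial g}{\partial x}(x)^\top u-\frac{\partial h}{\partial x}(x)^\top v$, i.e. $\mathcal{G}_\alpha$ is the closed-loop vector field obtained by applying this feedback to the control system $\dot x=-\nabla f(x)-\frac{\partial g}{\partial x}(x)^\top u-\frac{\partial h}{\partial x}(x)^\top v$.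
   Context: Let $f:\mathbb{R}^n\to\mathbb{R}$, $g:\mathbb{R}^n\to\mathbb{R}^m$, $h:\mathbb{R}^n\to\mathbb{R}^k$ be continuously differentiable (program: minimize $f$ subject to $g\le0$, $h=0$). Abbreviate $G=\frac{\partial g}{\partial x}(x)$, $H=\frac{\partial h}{\partial x}(x)$. For $\alpha>0$, $\mathcal{G}_\alpha(x)$ is the unique minimizer over $\xi\in\mathbb{R}^n$ of $\frac12\|\xi+\nabla f(x)\|^2$ subject to $G\xi\le-\alpha g(x)$, $H\xi=-\alpha h(x)$. $\Lambda_\alpha(x)$ is the set of $(u,v)\in\mathbb{R}^m_{\ge0}\times\mathbb{R}^k$ for which there exists $\xi\in\mathbb{R}^n$ with $\xi+\nabla f(x)+G^\top u+H^\top v=0$, $G\xi+\alpha g(x)\le0$, $H\xi+\alpha h(x)=0$, $u\ge0$, $u^\top(G\xi+\alpha g(x))=0$. The admissible control set is $K_\alpha(x)=\{(u,v)\in\mathbb{R}^m_{\ge0}\times\mathbb{R}^k: -GG^\top u-GH^\top v\le G\nabla f(x)-\alpha g(x),\ -HG^\top u-HH^\top v=H\nabla f(x)-\alpha h(x)\}$. *)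

(* Defs.v *)
From HB Require Import structures.
From mathcomp Require Import all_boot all_order all_algebra.
From mathcomp Require Import all_classical all_reals all_analysis.
Set Implicit Arguments. Unset Strict Implicit. Unset Printing Implicit Defensive.
Import Order.TTheory GRing.Theory Num.Theory.
Import numFieldNormedType.Exports.
Local Open Scope ring_scope.

Section Defs.
Variable R : realType.

Definition evec (n : nat) (i : 'I_n) : 'cV[R]_n := delta_mx i 0.

(* continuously differentiable (C^1): differentiable everywhere, with
   continuous partial derivatives (equivalent to C^1 in finite dimension) *)
Definition C1 (n p : nat) (F : 'cV[R]_n -> 'cV[R]_p) : Prop :=
  (forall y, differentiable F y) /\
  (forall i : 'I_n, continuous (fun y => 'D_(evec i) F y)).

Definition C1s (n : nat) (F : 'cV[R]_n -> R) : Prop :=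
  (forall y, differentiable F y) /\
  (forall i : 'I_n, continuous (fun y => 'D_(evec i) F y)).

Definition grad (n : nat) (f : 'cV[R]_n -> R) (x : 'cV[R]_n) : 'cV[R]_n :=
  \col_i ('D_(evec i) f x).

Definition jac (n p : nat) (F : 'cV[R]_n -> 'cV[R]_p) (x : 'cV[R]_n) : 'M[R]_(p, n) :=
  \matrix_(j, i) (('D_(evec i) F x) j 0).

Definition sqnorm (p : nat) (v : 'cV[R]_p) : R := \sum_i (v i 0) ^+ 2.

Definition cle (p : nat) (a b : 'cV[R]_p) : Prop := forall j, a j 0 <= b j 0.

Variables (n m k : nat) (f : 'cV[R]_n -> R) (g : 'cV[R]_n -> 'cV[R]_m)
  (h : 'cV[R]_n -> 'cV[R]_k).

Definition QPfeas (alpha : R) (x xi : 'cV[R]_n) : Prop :=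
  cle (jac g x *m xi) (- (alpha *: g x)) /\ jac h x *m xi = - (alpha *: h x).

Definition QPmin (alpha : R) (x xi : 'cV[R]_n) : Prop :=
  QPfeas alpha x xi /\
  forall zeta, QPfeas alpha x zeta ->
    (1/2) * sqnorm (xi + grad f x) <= (1/2) * sqnorm (zeta + grad f x).

Definition Galpha (alpha : R) (x : 'cV[R]_n) : 'cV[R]_n :=
  xget 0 [set xi | QPmin alpha x xi].

Definition Lambda (alpha : R) (x : 'cV[R]_n) : set ('cV[R]_m * 'cV[R]_k) :=
  [set uv | let u := uv.1 in let v := uv.2 in
    cle 0 u /\
    exists xi : 'cV[R]_n,
      xi + grad f x + (jac g x)^T *m u + (jac h x)^T *m v = 0 /\
      cle (jac g x *m xi + alpha *: g x) 0 /\
      jac h x *m xi + alpha *: h x = 0 /\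
      cle 0 u /\
      (u^T *m (jac g x *m xi + alpha *: g x)) 0 0 = 0].

Definition Kadm (alpha : R) (x : 'cV[R]_n) : set ('cV[R]_m * 'cV[R]_k) :=
  [set uv | let u := uv.1 in let v := uv.2 in
    cle 0 u /\
    cle (- (jac g x *m (jac g x)^T *m u) - jac g x *m (jac h x)^T *m v)
        (jac g x *m grad f x - alpha *: g x) /\
    - (jac h x *m (jac g x)^T *m u) - jac h x *m (jac h x)^T *m v
      = jac h x *m grad f x - alpha *: h x].

Definition Kmin (alpha : R) (x : 'cV[R]_n) (uv : 'cV[R]_m * 'cV[R]_k) : Prop :=
  Kadm alpha x uv /\
  forall uv', Kadm alpha x uv' ->
    sqnorm ((jac g x)^T *m uv.1 + (jac h x)^T *m uv.2)
      <= sqnorm ((jac g x)^T *m uv'.1 + (jac h x)^T *m uv'.2).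

End Defs.

(* Main.v *)
Require Import Defs.
From HB Require Import structures.
From mathcomp Require Import all_boot all_order all_algebra.
From mathcomp Require Import all_classical all_reals all_analysis.
Import Order.TTheory GRing.Theory Num.Theory.
Import numFieldNormedType.Exports.
Local Open Scope ring_scope.
From mathcomp Require Import ring lra.
Set Implicit Arguments. Unset Strict Implicit.
Section S.
Variable R : realType.
Definition mdot {p : nat} (a b : 'cV[R]_p) : R := (a^T *m b) 0 0.
Lemma mdotE p (a b : 'cV[R]_p) : mdot a b = \sum_i a i 0 * b i 0.
Proof. by rewrite /mdot mxE; apply: eq_bigr => i _; rewrite mxE. Qed.
Lemma dotDr p (a b c : 'cV[R]_p) : mdot a (b + c) = mdot a b + mdot a c.
Proof. by rewrite /mdot mulmxDr mxE. Qed.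
Lemma dotNr p (a b : 'cV[R]_p) : mdot a (- b) = - mdot a b.
Proof. by rewrite /mdot mulmxN mxE. Qed.
Lemma dotC p (a b : 'cV[R]_p) : mdot a b = mdot b a.
Proof. by rewrite !mdotE; apply: eq_bigr => i _; rewrite mulrC. Qed.
Lemma dotDl p (a b c : 'cV[R]_p) : mdot (a + b) c = mdot a c + mdot b c.
Proof. by rewrite dotC dotDr !(dotC c). Qed.
Lemma dotNl p (a b : 'cV[R]_p) : mdot (- a) b = - mdot a b.
Proof. by rewrite dotC dotNr dotC. Qed.
Lemma dot_tr p q (A : 'M[R]_(p,q)) u z : mdot (A^T *m u) z = mdot u (A *m z).
Proof. by rewrite /mdot trmx_mul trmxK mulmxA. Qed.
Lemma sqnorm_dot p (a : 'cV[R]_p) : sqnorm a = mdot a a.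
Proof. by rewrite mdotE /sqnorm; apply: eq_bigr => i _; rewrite expr2. Qed.
Lemma sqnormD p (a b : 'cV[R]_p) : sqnorm (a + b) = sqnorm a + 2 * mdot a b + sqnorm b.
Proof. rewrite !sqnorm_dot dotDl !dotDr (dotC b a); ring. Qed.
Lemma sqnormN p (a : 'cV[R]_p) : sqnorm (- a) = sqnorm a.
Proof. by rewrite !sqnorm_dot dotNl dotNr opprK. Qed.
Lemma sqnorm_ge0 p (a : 'cV[R]_p) : 0 <= sqnorm a.
Proof. by apply: sumr_ge0 => i _; apply: sqr_ge0. Qed.
Lemma sqnorm_eq0 p (a : 'cV[R]_p) : sqnorm a <= 0 -> a = 0.
Proof.
move=> H; have H0 : sqnorm a = 0 by apply/le_anti; rewrite H sqnorm_ge0.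
move/eqP: H0; rewrite psumr_eq0; last by move=> i _; apply: sqr_ge0.
move/allP => Hall; apply/matrixP => i j; rewrite (ord1 j) mxE.
by have := Hall i (mem_index_enum i); rewrite /= sqrf_eq0 => /eqP.
Qed.
Lemma dot_le0 p (u e : 'cV[R]_p) : cle 0 u -> cle e 0 -> mdot u e <= 0.
Proof.
move=> hu he; rewrite mdotE; apply: sumr_le0 => i _.
have := hu i; have := he i; rewrite !mxE => a b; exact: mulr_ge0_le0.
Qed.
Lemma kkt p q r (G : 'M[R]_(q,p)) (H : 'M[R]_(r,p)) (d xi0 z : 'cV[R]_p)
  (gv : 'cV[R]_q) (hv : 'cV[R]_r) u v (a : R) :
  cle 0 u -> xi0 + d + G^T *m u + H^T *m v = 0 ->
  (u^T *m (G *m xi0 + a *: gv)) 0 0 = 0 -> H *m xi0 + a *: hv = 0 ->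
  cle (G *m z) (- (a *: gv)) -> H *m z = - (a *: hv) ->
  sqnorm (xi0 + d) + sqnorm (z - xi0) <= sqnorm (z + d).
Proof.
move=> hu e1 e2 e3 fz hz.
have -> : z + d = (xi0 + d) + (z - xi0).
  by rewrite [RHS]addrC addrA subrK.
rewrite (sqnormD (xi0 + d)); suff: 0 <= mdot (xi0 + d) (z - xi0) by move=> ?; lra.
have exd : xi0 + d = - (G^T *m u + H^T *m v).
  by apply/eqP; rewrite -addr_eq0 addrA; apply/eqP.
have eh : H *m (z - xi0) = 0.
  by rewrite mulmxBr hz; apply/eqP; rewrite subr_eq0 eq_sym -addr_eq0; apply/eqP.
have eg : G *m (z - xi0) = (G *m z + a *: gv) - (G *m xi0 + a *: gv).
  by rewrite mulmxBr opprD addrACA subrr addr0.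
rewrite exd dotNl dotDl !dot_tr eh eg dotDr dotNr.
have -> : mdot u (G *m xi0 + a *: gv) = 0 by [].
have -> : mdot v 0 = 0 by rewrite /mdot mulmx0 mxE.
rewrite subr0 addr0.
rewrite oppr_ge0.
apply: dot_le0 => // j; have := fz j; rewrite !mxE; lra.
Qed.
Definition xiof p q r (d : 'cV[R]_p) (G : 'M[R]_(q,p)) (H : 'M[R]_(r,p)) u v :=
  - d - G^T *m u - H^T *m v.
Lemma xiofd p q r (d : 'cV[R]_p) (G : 'M[R]_(q,p)) (H : 'M[R]_(r,p)) u v :
  xiof d G H u v + d = - (G^T *m u + H^T *m v).
Proof. by apply/matrixP => i j; rewrite !mxE; lra. Qed.
Lemma xiof_eq p q r (d xi : 'cV[R]_p) (G : 'M[R]_(q,p)) (H : 'M[R]_(r,p)) u v :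
  xi + d + G^T *m u + H^T *m v = 0 -> xi = xiof d G H u v.
Proof.
move=> e; apply/matrixP => i j; have := congr1 (fun M : 'M[R]_(p,1) => M i j) e.
by rewrite !mxE => ?; lra.
Qed.
Lemma Gxiof p q r s (d : 'cV[R]_p) (G : 'M[R]_(q,p)) (H : 'M[R]_(r,p)) (K : 'M[R]_(s,p)) u v :
  K *m xiof d G H u v = (- (K *m G^T *m u) - K *m H^T *m v) - K *m d.
Proof.
rewrite /xiof !mulmxBr !mulmxN !mulmxA.
by apply/matrixP => i j; rewrite !mxE; lra.
Qed.
Lemma feas_ineq p q r (d : 'cV[R]_p) (G : 'M[R]_(q,p)) (H : 'M[R]_(r,p)) u v (gv : 'cV[R]_q) a :
  cle (- (G *m G^T *m u) - G *m H^T *m v) (G *m d - a *: gv) <->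
  cle (G *m xiof d G H u v) (- (a *: gv)).
Proof.
rewrite Gxiof; split => hc j; have := hc j; rewrite !mxE; lra.
Qed.
Lemma feas_eq p q r (d : 'cV[R]_p) (G : 'M[R]_(q,p)) (H : 'M[R]_(r,p)) u v (hv : 'cV[R]_r) a :
  (- (H *m G^T *m u) - H *m H^T *m v = H *m d - a *: hv) <->
  (H *m xiof d G H u v = - (a *: hv)).
Proof.
rewrite Gxiof; split => e; apply/matrixP => i j; have := congr1 (fun M : 'M[R]_(r,1) => M i j) e;
  rewrite !mxE => ?; lra.
Qed.
End S.

Theorem mainTheorem6 (R : realType) (n m k : nat)
  (f : 'cV[R]_n -> R) (g : 'cV[R]_n -> 'cV[R]_m) (h : 'cV[R]_n -> 'cV[R]_k)
  (hf : C1s f) (hg : C1 g) (hh : C1 h)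
  (alpha : R) (x : 'cV[R]_n) :
  0 < alpha ->
  (exists uv, Lambda f g h alpha x uv) ->
  (forall uv, Lambda f g h alpha x uv -> Kmin f g h alpha x uv) /\
  (forall uv, Kmin f g h alpha x uv ->
     Galpha f g h alpha x
       = - grad f x - (jac g x)^T *m uv.1 - (jac h x)^T *m uv.2).
Proof.
move=> ha [uv0 L0].
set G := jac g x; set H := jac h x; set d := grad f x.
have kadm : forall u v, Kadm f g h alpha x (u, v) <->
    cle 0 u /\ QPfeas g h alpha x (xiof d G H u v).
  move=> u v; rewrite /Kadm /QPfeas /=; split.
    by case=> hu [c e]; split => //; split; [apply/feas_ineq | apply/feas_eq].
  by case=> hu [c e]; split => //; split; [apply/feas_ineq | apply/feas_eq].
have part1 : forall uv, Lambda f g h alpha x uv ->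
   Kmin f g h alpha x uv /\
   forall z, QPfeas g h alpha x z ->
     sqnorm (xiof d G H uv.1 uv.2 + d) + sqnorm (z - xiof d G H uv.1 uv.2)
       <= sqnorm (z + d).
  move=> [u v] [/= hu [xi [e1 [c1 [e2 [_ e3]]]]]].
  have exi := xiof_eq e1.
  have fz : QPfeas g h alpha x xi.
    split; last by apply/eqP; rewrite -addr_eq0; apply/eqP.
    by move=> j; have := c1 j; rewrite !mxE; lra.
  have key : forall z, QPfeas g h alpha x z ->
     sqnorm (xiof d G H u v + d) + sqnorm (z - xiof d G H u v) <= sqnorm (z + d).
    by move=> z [fz1 fz2]; rewrite -exi; apply: (kkt hu e1 e3 e2 fz1 fz2).
  split => //; split; first by apply/kadm; rewrite -exi.
  move=> [u' v'] /kadm [hu' fz'] /=.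
  have := key _ fz'; rewrite !xiofd !sqnormN.
  by have := sqnorm_ge0 (xiof d G H u' v' - xiof d G H u v); lra.
split; first by move=> uv /part1 [].
move=> [u v] [/kadm [hu fz1] Km] /=.
have [[Ka0 _] Hz] := part1 _ L0.
have := Km _ Ka0; rewrite /= -/G -/H -sqnormN -(sqnormN (_ + _)) -!(xiofd d) => le1.
have := Hz _ fz1 => le2.
have e01 : xiof d G H u v = xiof d G H uv0.1 uv0.2.
  apply/eqP; rewrite -subr_eq0; apply/eqP; apply: sqnorm_eq0.
  by have := sqnorm_ge0 (xiof d G H uv0.1 uv0.2 + d); lra.
rewrite [RHS](_ : _ = xiof d G H u v) // e01 /Galpha; apply: xget_unique.
  split; first by rewrite -e01.
  move=> z fz; have := Hz _ fz.
  by have := sqnorm_ge0 (z - xiof d G H uv0.1 uv0.2); lra.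
move=> y [fy my]; have := my _ fz1; have := Hz _ fy.
rewrite -e01 => l1 l2.
apply/eqP; rewrite -subr_eq0; apply/eqP; apply: sqnorm_eq0.
by have := sqnorm_ge0 (xiof d G H uv0.1 uv0.2 + d); lra.
Qed.
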